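(* Let $G$ be a directed $st$-graph that does not contain a subgraph homeomorphic to the Wheatstone graph $W$, and let $C$ be a simple directed cycle in $G$. Then some edge $e$ of $C$ can be removed so that the resulting graph $G'=(V,E\setminus\{e\},s,t)$ satisfies $\mathrm{Path}_A(G')=\mathrm{Path}_A(G)$.
   Context: A directed $st$-graph $G=(V,E,s,t)$ is a finite directed graph with no self-loops and no parallel edges, with distinct source $s$ (no incoming edges) and sink $t$ (no outgoing edges), such that every vertex lies on some directed walk from $s$ to $t$. $\mathrm{Path}_A(G)$ is the set of acyclic (simple) directed paths from $s$ to $t$ in $G$. The Wheatstone graph $W$ has vertices $s,u,v,t$ and edges $s\to u$, $s\to v$, $u\to v$, $u\to t$, $v\to t$. $G$ contains a subgraph homeomorphic to $W$ if there are distinct vertices $s',u',v',t'$ of $G$ and directed paths $s'\leadsto u'$, $s'\leadsto v'$, $u'\leadsto v'$, $u'\leadsto t'$, $v'\leadsto t'$ that pairwise share no vertices other than common endpoints. *)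

(* Defs.v *)
(* A directed graph without parallel edges on a finite vertex
   type V is an edge relation e : rel V (e x y <-> there is an edge x -> y). *)
From mathcomp Require Import all_boot.
Set Implicit Arguments. Unset Strict Implicit. Unset Printing Implicit Defensive.

Section Defs.
Variable V : finType.

Definition st_graph (e : rel V) (s t : V) : Prop :=
  [/\ irreflexive e, s != t, (forall x, ~~ e x s), (forall x, ~~ e t x)
    & (forall v, connect e s v && connect e v t)].

Definition spath (e : rel V) (x y : V) (p : seq V) : bool :=
  [&& path e x p, last x p == y & uniq (x :: p)].

Definition PathA (e : rel V) (s t : V) : pred (seq V) :=
  fun p => spath e s t p.

Definition int_disjoint (x1 y1 : V) (p1 : seq V) (x2 y2 : V) (p2 : seq V) : Prop :=
  forall z, z \in x1 :: p1 -> z \in x2 :: p2 ->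
    (z \in [:: x1; y1]) && (z \in [:: x2; y2]).

Definition has_Wheatstone (e : rel V) : Prop :=
  exists (s' u' v' t' : V) (psu psv puv put pvt : seq V),
    [/\ uniq [:: s'; u'; v'; t'],
        [/\ spath e s' u' psu, spath e s' v' psv, spath e u' v' puv,
            spath e u' t' put & spath e v' t' pvt],
        [/\ int_disjoint s' u' psu s' v' psv,
            int_disjoint s' u' psu u' v' puv,
            int_disjoint s' u' psu u' t' put,
            int_disjoint s' u' psu v' t' pvt &
            int_disjoint s' v' psv u' v' puv],
        [/\ int_disjoint s' v' psv u' t' put,
            int_disjoint s' v' psv v' t' pvt,
            int_disjoint u' v' puv u' t' put &
            int_disjoint u' v' puv v' t' pvt]
      & int_disjoint u' t' put v' t' pvt].

Definition simple_cycle (e : rel V) (c : seq V) : bool :=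
  [&& c != [::], uniq c & cycle e c].

Definition del_edge (e : rel V) (a b : V) : rel V :=
  fun x y => e x y && ~~ ((x == a) && (y == b)).

End Defs.

(* Main.v *)
Require Import Defs.
From mathcomp Require Import all_boot.
From mathcomp Require Import zify.
From Stdlib Require Import Classical.
Set Implicit Arguments. Unset Strict Implicit. Unset Printing Implicit Defensive.

Section Gen.
Variable T : eqType.
Implicit Types (w : seq T) (z : T).

Lemma mem_seg w i j z : uniq w ->
  (z \in drop i (take j w)) = (z \in w) && (i <= index z w < j).
Proof.
move=> Uw; apply/idP/idP.
- move=> zin.
  have zw : z \in w by move: zin => /mem_drop /mem_take.
  rewrite zw /=.
  set k := index z (drop i (take j w)).
  have kl : k < size (drop i (take j w)) by rewrite index_mem.
  have := nth_index z zin; rewrite -/k nth_drop nth_take; last first.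
    by move: kl; rewrite size_drop size_take; case: ifP; lia.
  move=> E; have := index_uniq z (_ : i + k < size w) Uw.
  rewrite E => ->; first by move: kl; rewrite size_drop size_take; case: ifP; lia.
  by move: kl; rewrite size_drop size_take; case: ifP; lia.
- case/andP=> zw /andP[l1 l2].
  have zl : index z w < size w by rewrite index_mem.
  have -> : z = nth z (drop i (take j w)) (index z w - i).
    by rewrite nth_drop nth_take subnKC ?nth_index //; lia.
  by apply: mem_nth; rewrite size_drop size_take; case: ifP; lia.
Qed.

Lemma nth_seg w i j k x0 : i + k < j -> nth x0 (drop i (take j w)) k = nth x0 w (i + k).
Proof. by move=> h; rewrite nth_drop nth_take. Qed.

Lemma size_seg w i j : size (drop i (take j w)) = minn j (size w) - i.
Proof. by rewrite size_drop size_take; case: ifP; lia. Qed.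

Lemma idx_inj w a b : a \in w -> b \in w -> index a w = index b w -> a = b.
Proof. by move=> ha hb E; rewrite -(nth_index a ha) E nth_index. Qed.

Lemma eq_index w a b : a \in w -> b \in w -> (a == b) = (index a w == index b w).
Proof.
move=> ha hb; apply/eqP/eqP; first by move->.
exact: idx_inj.
Qed.
End Gen.
Section G.
Variables (V : finType) (e : rel V) (s t : V).

Definition epath (w : seq V) := forall i, i.+1 < size w -> e (nth s w i) (nth s w i.+1).
Definition FP w := [/\ epath w, uniq w, 0 < size w, nth s w 0 = s & nth s w (size w).-1 = t].
Definition seg (w : seq V) i j := drop i (take j.+1 w).

Lemma mem_segI w i j z : uniq w ->
  (z \in seg w i j) = (z \in w) && (i <= index z w <= j).
Proof. by move=> Uw; rewrite /seg mem_seg. Qed.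

Lemma size_segI w i j : j < size w -> size (seg w i j) = j.+1 - i.
Proof. by move=> h; rewrite /seg size_seg; move/minn_idPl: h => ->. Qed.

Lemma spath_of (w : seq V) x y : epath w -> uniq w -> 0 < size w ->
  nth s w 0 = x -> nth s w (size w).-1 = y ->
  spath e x y (behead w) /\ x :: behead w = w.
Proof.
case: w => [|a p] //= Ep Uw _ <- Ly; split => //.
rewrite /spath; apply/and3P; split => //.
  apply/(pathP s) => i hi; exact: (Ep i).
by rewrite (last_nth s) Ly.
Qed.

Lemma seg_spath w i j : epath w -> uniq w -> i <= j -> j < size w ->
  spath e (nth s w i) (nth s w j) (behead (seg w i j)) /\
  nth s w i :: behead (seg w i j) = seg w i j.
Proof.
move=> Ep Uw ij js; apply: spath_of.
- move=> k; rewrite size_segI // => hk.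
  rewrite /seg !nth_seg; try lia. rewrite addnS; apply: Ep; lia.
- by rewrite /seg drop_uniq // take_uniq.
- rewrite size_segI //; lia.
- by rewrite /seg nth_seg ?addn0 //; lia.
- rewrite size_segI // /seg nth_seg; last lia.
  congr nth; lia.
Qed.

Lemma FP_of p : PathA e s t p -> FP (s :: p).
Proof.
case/and3P=> Pp /eqP Lp Up; split => //=.
- move=> i hi; exact: (pathP s Pp).
- by rewrite -Lp (last_nth s).
Qed.

Lemma FP_s w : FP w -> s \in w /\ index s w = 0.
Proof.
case=> _ Uw sw hw _; have sin : s \in w by rewrite -{1}hw mem_nth.
by split => //; rewrite -{1}hw index_uniq.
Qed.

Lemma FP_t w : FP w -> t \in w /\ index t w = (size w).-1.
Proof.
case=> _ Uw sw _ lw; have tin : t \in w by rewrite -{1}lw mem_nth // prednK.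
by split => //; rewrite -{1}lw index_uniq // prednK.
Qed.

Lemma mkW a b c d A1 A2 A3 A4 A5 :
  uniq [:: a; b; c; d] ->
  spath e a b (behead A1) -> a :: behead A1 = A1 ->
  spath e a c (behead A2) -> a :: behead A2 = A2 ->
  spath e b c (behead A3) -> b :: behead A3 = A3 ->
  spath e b d (behead A4) -> b :: behead A4 = A4 ->
  spath e c d (behead A5) -> c :: behead A5 = A5 ->
  (forall z, z \in A1 -> z \in A2 -> (z \in [:: a; b]) && (z \in [:: a; c])) ->
  (forall z, z \in A1 -> z \in A3 -> (z \in [:: a; b]) && (z \in [:: b; c])) ->
  (forall z, z \in A1 -> z \in A4 -> (z \in [:: a; b]) && (z \in [:: b; d])) ->
  (forall z, z \in A1 -> z \in A5 -> (z \in [:: a; b]) && (z \in [:: c; d])) ->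
  (forall z, z \in A2 -> z \in A3 -> (z \in [:: a; c]) && (z \in [:: b; c])) ->
  (forall z, z \in A2 -> z \in A4 -> (z \in [:: a; c]) && (z \in [:: b; d])) ->
  (forall z, z \in A2 -> z \in A5 -> (z \in [:: a; c]) && (z \in [:: c; d])) ->
  (forall z, z \in A3 -> z \in A4 -> (z \in [:: b; c]) && (z \in [:: b; d])) ->
  (forall z, z \in A3 -> z \in A5 -> (z \in [:: b; c]) && (z \in [:: c; d])) ->
  (forall z, z \in A4 -> z \in A5 -> (z \in [:: b; d]) && (z \in [:: c; d])) ->
  has_Wheatstone e.
Proof.
move=> U S1 E1 S2 E2 S3 E3 S4 E4 S5 E5 D12 D13 D14 D15 D23 D24 D25 D34 D35 D45.
exists a, b, c, d, (behead A1), (behead A2), (behead A3), (behead A4), (behead A5).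
rewrite /int_disjoint E1 E2 E3 E4 E5; split => //.
Qed.

End G.
Ltac prune := repeat match goal with
 | H : ?T |- _ => lazymatch T with
     | is_true (leq _ _) => fail
     | is_true (~~ _) => fail
     | is_true (_ && _) => fail
     | @eq nat _ _ => fail
     | _ \/ _ => fail
     | _ => clear H end end.
Ltac plia := prune; lia.

Section Cross.
Variables (V : finType) (e : rel V) (s t : V).
Local Notation FP := (FP e s t).
Local Notation seg := (@seg V).

Lemma crossW P R x y : FP P -> FP R -> x \in P -> y \in P -> x \in R -> y \in R ->
  index x P < index y P -> index y R < index x R -> has_Wheatstone e.
Proof.
move=> FPP FPR xP yP xR yR hxy hyx.
have [sP isP] := FP_s FPP. have [sR isR] := FP_s FPR.
have [tP itP] := FP_t FPP. have [tR itR] := FP_t FPR.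
case: FPP => EP UP szP _ _. case: FPR => ER UR szR _ _.
pose bad z := [&& z \in P, z \in R & [exists x', [&& x' \in P, x' \in R,
   index x' P < index z P & index z R < index x' R]]].
have by0 : bad y by rewrite /bad yP yR; apply/existsP; exists x; rewrite xP xR hxy hyx.
case: (arg_minnP (fun z => index z R) by0) => y1 by1 miny.
clear x xP xR hxy hyx yP yR by0 y. rename y1 into y.
case/and3P: by1 => yP yR /existsP[x0 /and4P[x0P x0R hx0y hyx0]].
have nobad : forall z w, z \in P -> z \in R -> w \in P -> w \in R ->
   index w P < index z P -> index z R < index w R -> index y R <= index z R.
  move=> z w zP zR wP wR h1 h2; apply: miny; rewrite /bad zP zR; apply/existsP; exists w.
  by rewrite wP wR h1 h2.
have ys : index y R != 0.
  apply/negP=> /eqP h. have ey : y = s by apply (idx_inj yR sR); rewrite h isR.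
  by move: hx0y; rewrite ey isP.
have as0 : [&& s \in P, s \in R & index s R < index y R] by rewrite sP sR isR lt0n ys.
case: (@arg_maxnP V s (fun z => [&& z \in P, z \in R & index z R < index y R]) (fun z => index z R) as0) => a /and3P[aP aR hay] maxa.
have H1 : index a P < index y P.
  rewrite ltnNge leq_eqVlt negb_or; apply/andP; split.
    apply/negP => /eqP h. have ea : y = a by apply (idx_inj yP aP h).
    by move: hay; rewrite ea ltnn.
  apply/negP => h. have := nobad a y aP aR yP yR h hay. plia.
have H2 : index a P < index x0 P.
  rewrite ltnNge leq_eqVlt negb_or; apply/andP; split.
    apply/negP => /eqP h. have ea : x0 = a by apply (idx_inj x0P aP h).
    move: hyx0 hay; rewrite ea; plia.
  apply/negP => h. have := nobad a x0 aP aR x0P x0R h (ltn_trans hay hyx0). plia.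
have xs0 : [&& x0 \in P, x0 \in R & index a P < index x0 P < index y P]
  by rewrite x0P x0R H2 hx0y.
case: (@arg_maxnP V x0 (fun z => [&& z \in P, z \in R & index a P < index z P < index y P]) (fun z => index z R) xs0) => xx /and3P[xP xR /andP[hax hxy]] maxx.
have hyxx : index y R < index xx R by have := maxx x0 xs0; plia.
have yPs : index y P < size P by rewrite index_mem.
have xRs : index xx R < size R by rewrite index_mem.
have xt : index xx R < index t R.
  have nxt : index xx R != index t R.
    by apply/eqP => h; have ext := idx_inj xR tR h; move: hxy; rewrite ext itP; plia.
  move: nxt; rewrite itR; plia.
have zs0 : [&& t \in P, t \in R & index xx R < index t R] by rewrite tP tR xt.
case: (@arg_minnP V t (fun z => [&& z \in P, z \in R & index xx R < index z R]) (fun z => index z R) zs0) => zz /and3P[zP zR hxz] minz.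
have zPs : index zz P < size P by rewrite index_mem.
have zRs : index zz R < size R by rewrite index_mem.
have H3 : index y P < index zz P.
  have c1 : ~~ (index zz P < index a P).
    apply/negP => h.
    have := nobad a zz aP aR zP zR h (ltn_trans hay (ltn_trans hyxx hxz)); plia.
  have c2 : index zz P != index a P.
    by apply/eqP => h; have ez := idx_inj zP aP h; move: hxz; rewrite ez; plia.
  have c3 : ~~ (index a P < index zz P < index y P).
    apply/negP => h. have := maxx zz; rewrite zP zR h => /(_ isT). plia.
  have c4 : index zz P != index y P.
    by apply/eqP => h; have ez := idx_inj zP yP h; move: hxz; rewrite ez; plia.
  plia.
have memA2 : forall v, v \in R -> index a R <= index v R <= index y R -> v \in P ->
    index v P = index a P \/ index v P = index y P.
  move=> v vR /andP[l1 l2] vP.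
  case: (ltnP (index v R) (index y R)) => h.
  - left; congr index; apply (idx_inj vR aR).
    by have := maxa v; rewrite vP vR h => /(_ isT); plia.
  - right; congr index; apply (idx_inj vR yR); plia.
have memA4 : forall v, v \in R -> index xx R <= index v R <= index zz R -> v \in P ->
    index v P = index xx P \/ index v P = index zz P.
  move=> v vR /andP[l1 l2] vP.
  case: (ltnP (index xx R) (index v R)) => h.
  - right; congr index; apply (idx_inj vR zR).
    by have := minz v; rewrite vP vR h => /(_ isT); plia.
  - left; congr index; apply (idx_inj vR xR); plia.
have aPs : index a P < size P by rewrite index_mem.
have aRs : index a R < size R by rewrite index_mem.
have [S1 E1] := seg_spath EP UP (ltnW hax) (ltn_trans hxy yPs).
have [S2 E2] := seg_spath ER UR (ltnW hay) (ltn_trans hyxx xRs).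
have [S3 E3] := seg_spath EP UP (ltnW hxy) yPs.
have [S4 E4] := seg_spath ER UR (ltnW hxz) zRs.
have [S5 E5] := seg_spath EP UP (ltnW H3) zPs.
rewrite !nth_index // in S1 E1 S2 E2 S3 E3 S4 E4 S5 E5.
apply: (mkW _ S1 E1 S2 E2 S3 E3 S4 E4 S5 E5).
- rewrite /= !inE !(eq_index aP) // !(eq_index xP) // !(eq_index yP) //; plia.
all: move=> v h1 h2; rewrite !mem_segI // in h1 h2;
  case/andP: h1 => m1 r1; case/andP: h2 => m2 r2;
  first [ have vP : v \in P by [exact m1 | exact m2] | plia ];
  try have := memA2 v m1 r1 vP; try have := memA2 v m2 r2 vP;
  try have := memA4 v m1 r1 vP; try have := memA4 v m2 r2 vP;
  rewrite !inE !(eq_index vP) //; plia.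
Qed.
End Cross.

Lemma walk (T : eqType) (P : seq T) (f : T -> T) n x0 :
  x0 \in P -> iter n f x0 \in P -> index (iter n f x0) P < index x0 P ->
  exists i m, [/\ i + m <= n, 0 < m, iter i f x0 \in P,
     iter m f (iter i f x0) \in P &
     index (iter m f (iter i f x0)) P < index (iter i f x0) P] /\
     forall l, 0 < l < m -> iter l f (iter i f x0) \notin P.
Proof.
elim: n {-2}n (leqnn n) x0 => [|N IH] n hn x0 x0P nP lt.
  by move: hn lt; rewrite leqn0 => /eqP ->; rewrite ltnn.
have n0 : 0 < n by case: n hn nP lt => //= _ _; rewrite ltnn.
have exQ : exists l, (0 < l) && (iter l f x0 \in P) by exists n; rewrite n0 nP.
case: (ex_minnP exQ) => m0 /andP[m0p m0P] minm.
have m0n : m0 <= n by apply: minm; rewrite n0 nP.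
case: (ltnP (index (iter m0 f x0) P) (index x0 P)) => h.
- exists 0, m0; split; first by split => //; lia.
  move=> l /andP[l0 lm]; apply/negP => lP.
  have := minm l; rewrite l0 lP => /(_ isT). lia.
- have m0lt : m0 < n.
    rewrite ltn_neqAle m0n andbT; apply/negP=> /eqP E; move: h lt; rewrite E; lia.
  have E : iter (n - m0) f (iter m0 f x0) = iter n f x0 by rewrite -iterD subnK.
  have [i [m [[h1 h2 h3 h4 h5] h6]]] := IH (n - m0) ltac:(lia) (iter m0 f x0) m0P
     ltac:(by rewrite E) ltac:(rewrite E; lia).
  exists (i + m0), m; rewrite iterD; split => //; split => //; lia.
Qed.

Section D.
Variables (V : finType) (e : rel V) (s t : V).
Hypothesis Ht : forall x, ~~ e t x.
Local Notation FP := (FP e s t).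
Local Notation epath := (epath e s).

Definition used a b := exists w, [/\ FP w, a \in w, b \in w & index b w = (index a w).+1].

Lemma epath_cat w1 w2 : epath w1 -> epath w2 ->
  (0 < size w1 -> 0 < size w2 -> e (nth s w1 (size w1).-1) (nth s w2 0)) ->
  epath (w1 ++ w2).
Proof.
move=> E1 E2 J i; rewrite size_cat => hi; rewrite !nth_cat.
case: (ltnP i.+1 (size w1)) => h1.
- by rewrite (ltnW h1); apply: E1.
- case: (ltnP i (size w1)) => h2.
  +
    have ei : i = (size w1).-1 by lia.
    rewrite (_ : i.+1 - size w1 = 0); last lia.
    rewrite ei; apply: J; lia.
  +
    rewrite (_ : i.+1 - size w1 = (i - size w1).+1); last lia.
    apply: E2; lia.
Qed.

Lemma epath_seg w i j : epath w -> epath (drop i (take j w)).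
Proof.
move=> E k; rewrite size_seg; case: (leqP j (size w)) => hj.
- move=> hk; rewrite !nth_seg; try lia.
  rewrite addnS; apply: E; lia.
- move=> hk; rewrite !nth_seg; try lia.
  rewrite addnS; apply: E; lia.
Qed.

Lemma epath_take w j : epath w -> epath (take j w).
Proof. by move=> E; rewrite -[take j w]drop0; apply: epath_seg. Qed.

Lemma epath_drop w i : epath w -> epath (drop i w).
Proof. by move=> E; rewrite -[w in drop _ w]take_size; apply: epath_seg. Qed.

Lemma mem_takeI (w : seq V) j z : uniq w -> (z \in take j w) = (z \in w) && (index z w < j).
Proof. by move=> U; rewrite -[take j w]drop0 mem_seg. Qed.

Lemma mem_dropI (w : seq V) i z : uniq w -> (z \in drop i w) = (z \in w) && (i <= index z w).
Proof.
move=> U; rewrite -[w in drop _ w]take_size mem_seg //.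
case zw: (z \in w) => //=; rewrite index_mem zw andbT //.
Qed.

Lemma iter_next_mem (c : seq V) k x : x \in c -> iter k (next c) x \in c.
Proof. by move=> h; elim: k => //= k IH; rewrite mem_next. Qed.

Lemma chordW (c : seq V) : uniq c -> (forall v, v \in c -> used v (next c v)) ->
  forall m P u, FP P -> u \in c -> u \in P -> 0 < m ->
  iter m (next c) u \in P -> index (iter m (next c) u) P < index u P ->
  (forall l, 0 < l < m -> iter l (next c) u \notin P) -> has_Wheatstone e.
Proof.
move=> Uc Hc m; elim: m {-2}m (leqnn m) => [|M IH] m hm P u FPP uc uP m0 vP hvu nP.
  by move: hm m0; rewrite leqn0 => /eqP ->.
have [R0 [FPR uR qR iq]] := Hc u uc.
case: (leqP m 1) => m1.
  have m1' : m = 1 by plia.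
  move: vP hvu; rewrite m1' /= => vP hvu.
  by apply: (crossW FPP FPR vP uP qR uR hvu); rewrite iq.
have [sP isP] := FP_s FPP. have [tP itP] := FP_t FPP.
have [sR isR] := FP_s FPR. have [tR itR] := FP_t FPR.
have [EP UP szP hP lP] := FPP. have [ER UR szR hR lR] := FPR.
set q := next c u in qR iq.
have qP : q \notin P by have := nP 1; rewrite m1 => /(_ isT).
have qRs : index q R0 < size R0 by rewrite index_mem.
have eu : e u q.
  have := ER (index u R0); rewrite -iq => /(_ qRs).
  by rewrite !nth_index.
have ut : u != t by apply/eqP => E; move: eu; rewrite E (negbTE (Ht q)).
have uRt : index u R0 < index t R0.
  have nE : index u R0 != index t R0.
    by apply/eqP => E; move: ut; rewrite (idx_inj uR tR E) eqxx.
  move: nE; rewrite itR; plia.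
have ws0 : [&& t \in P, t \in R0 & index u R0 < index t R0] by rewrite tP tR uRt.
case: (@arg_minnP V t (fun z => [&& z \in P, z \in R0 & index u R0 < index z R0])
   (fun z => index z R0) ws0) => w /and3P[wP wR huw] minw.
have wRs : index w R0 < size R0 by rewrite index_mem.
have wPs : index w P < size P by rewrite index_mem.
have uPs : index u P < size P by rewrite index_mem.
have hqw : index q R0 < index w R0.
  have : index w R0 != index q R0.
    by apply/eqP=> E; move: qP; rewrite -(idx_inj wR qR E) wP.
  rewrite iq; plia.
case: (ltngtP (index w P) (index u P)) => hPuw;
  [exact: (crossW FPP FPR wP uP wR uR hPuw huw) | |
   by move: huw; rewrite (idx_inj wP uP hPuw) ltnn].
pose A := take (index u P).+1 P.
pose B := drop (index u R0).+1 (take (index w R0) R0).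
pose C := drop (index w P) P.
have szA : size A = (index u P).+1 by rewrite size_takel.
have szB : size B = index w R0 - (index u R0).+1.
  by rewrite /B size_seg (minn_idPl (ltnW wRs)).
have szC : size C = size P - index w P by rewrite size_drop.
have Bnot : forall z, z \in B -> z \notin P.
  move=> z; rewrite mem_seg // => /andP[zR /andP[l1 l2]]; apply/negP => zP.
  have := minw z; rewrite zP zR => /(_ ltac:(plia)). plia.
have nthA : forall k, k <= index u P -> nth s A k = nth s P k.
  by move=> k hk; rewrite nth_take.
pose P' := A ++ B ++ C.
have nthP'A : forall k, k <= index u P -> nth s P' k = nth s P k.
  by move=> k hk; rewrite nth_cat szA ifT ?nthA //; plia.
have nthP'q : nth s P' (index u P).+1 = q.
  rewrite nth_cat szA ltnn subnn nth_cat ifT; last plia.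
  by rewrite /B nth_seg ?addn0 -?iq ?nth_index //; plia.
have FPP' : FP P'.
  split.
  - apply: epath_cat; first exact: epath_take.
      apply: epath_cat; [exact: epath_seg | exact: epath_drop |].
      move=> _ _; rewrite /B /C nth_seg; last by rewrite szB; plia.
      rewrite nth_drop addn0 nth_index // szB.
      have := ER (index w R0).-1 ltac:(plia).
      rewrite (_ : (index u R0).+1 + (index w R0 - (index u R0).+1).-1 = (index w R0).-1); last plia.
      by rewrite prednK ?nth_index //; plia.
    move=> _ _; rewrite szA /= nthA // nth_index // nth_cat ifT; last plia.
    by rewrite /B nth_seg ?addn0 -?iq ?nth_index //; plia.
  - have UB : uniq B by apply: drop_uniq; apply: take_uniq.
    rewrite cat_uniq cat_uniq; apply/and3P; split;
      [exact: take_uniq | | apply/and3P; split; [exact: UB | | exact: drop_uniq]].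
      apply/hasPn => z; rewrite mem_cat => /orP[zB|zC].
        apply/negP => /mem_take zP; move/negP: (Bnot z zB); exact.
      rewrite mem_takeI //; rewrite mem_dropI // in zC.
      case/andP: zC => _ h; apply/negP => /andP[_ h']; plia.
    apply/hasPn => z zC; apply/negP => zB; move/negP: (Bnot z zB); apply.
    exact: mem_drop zC.
  - rewrite /P' size_cat szA; plia.
  - by rewrite nthP'A ?hP.
  - rewrite /P' !size_cat szA szB szC !nth_cat szA szB ifN; last plia.
    rewrite ifN; last plia.
    rewrite /C nth_drop -lP; congr nth; plia.
have [sP' _] := FP_s FPP'.
have [_ UP' szP' _ _] := FPP'.
have szP'b : (index u P).+1 < size P' by rewrite /P' !size_cat szA szB; plia.
set v := iter m (next c) u in vP hvu nP.
have idxv : index v P' = index v P.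
  rewrite -{1}(nth_index s vP) -nthP'A; last plia.
  rewrite index_uniq //; rewrite /P' !size_cat szA; plia.
have vP' : v \in P'.
  rewrite -(nth_index s vP) -nthP'A; last plia.
  apply: mem_nth; rewrite /P' !size_cat szA; plia.
have idxq : index q P' = (index u P).+1 by rewrite -nthP'q index_uniq //; plia.
have qP' : q \in P' by rewrite -nthP'q mem_nth //; plia.
have Ev : iter m.-1 (next c) q = v.
  by rewrite /q /v -iterSr prednK //; plia.
have [i [m' [[h1 h2 h3 h4 h5] h6]]] := walk (n := m.-1) (x0 := q) (f := next c) qP'
   ltac:(by rewrite Ev) ltac:(rewrite Ev idxv idxq; plia).
apply: (IH m' ltac:(plia) P' (iter i (next c) q) FPP' _ h3 h2 h4 h5 h6).
by apply: iter_next_mem; rewrite /q mem_next.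
Qed.
End D.

Lemma del_path (V : finType) (e : rel V) (s a b : V) x p :
  path e x p -> ~~ path (del_edge e a b) x p ->
  exists i, [/\ i < size p, nth s (x :: p) i = a & nth s p i = b].
Proof.
elim: p x => [|y p IH] x //= /andP[exy pp].
rewrite {1}/del_edge exy /=.
case: (boolP ((x == a) && (y == b))) => [/andP[/eqP xa /eqP yb] _ | _ /= np].
  by exists 0.
have [i [h1 h2 h3]] := IH y pp np.
by exists i.+1.
Qed.

Theorem lemma3 (V : finType) (e : rel V) (s t : V) (c : seq V) :
  st_graph e s t -> ~ has_Wheatstone e -> simple_cycle e c ->
  exists2 a : V, a \in c &
    forall p : seq V, PathA (del_edge e a (next c a)) s t p = PathA e s t p.
Proof.
move=> [Hirr Hst Hs Ht Hconn] noW /and3P[cn Uc Cc].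
case: (classic (exists a, a \in c /\ ~ used e s t a (next c a))) => [[a [ac na]] | H].
- exists a => // p; apply/idP/idP.
  + case/and3P => pp lp up; apply/and3P; split => //.
    by apply: (sub_path _ pp) => x y /andP[].
  + move=> Pp; have := Pp; case/and3P => pp lp up; apply/and3P; split => //.
    apply/negPn/negP => np; apply: na.
    have [i [h1 h2 h3]] := del_path s pp np.
    exists (s :: p); split; first exact: FP_of.
    * by rewrite -h2 mem_nth //=; lia.
    * have : nth s (s :: p) i.+1 \in s :: p by rewrite mem_nth //=; lia.
      by rewrite /= h3.
    * have : index (nth s (s :: p) i.+1) (s :: p) = (index (nth s (s :: p) i) (s :: p)).+1.
        by rewrite !index_uniq //=; lia.
      by rewrite /= h3 h2.
- have Hu : forall v, v \in c -> used e s t v (next c v).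
    move=> v vc; apply: NNPP => nv; apply: H; exists v; split => //.
  have ac : head t c \in c by case E: c cn => [|x c'] //= _; rewrite mem_head.
  set a := head t c in ac.
  have [P [FPP aP bP iab]] := Hu a ac.
  have bc : next c a \in c by rewrite mem_next.
  have fc : fconnect (next c) (next c a) a by rewrite (fconnect_cycle (cycle_next Uc) bc).
  have Ea := iter_findex fc.
  have [i [m [[h1 h2 h3 h4 h5] h6]]] := walk (n := findex (next c) (next c a) a)
     (x0 := next c a) (f := next c) bP ltac:(by rewrite Ea) ltac:(by rewrite Ea iab).
  exfalso; apply: noW; apply: (chordW Ht Uc Hu FPP (iter_next_mem i bc) h3 h2 h4 h5 h6).
Qed.
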